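(* Let $\nu\in\mathrm{O}(\Lambda)$ have cycle shape $2^{12}$, with vacuum anomaly $\rho_\nu=3/4$. There is no $h\in\pi_\nu(\Lambda\otimes\mathbb Q)$ such that the set of lattice points $\{\beta\in\pi_\nu(\Lambda):\langle\beta-h,\beta-h\rangle/2=1-\rho_\nu\}$, with edges defined by $\langle\beta_i-\beta_j,\beta_i-\beta_j\rangle/2=2(1-\rho_\nu)$ (no edge), $3(1-\rho_\nu)$ (single edge), $4(1-\rho_\nu)$ (double edge), forms a diagram containing $A_2^3$. In particular, there is no generalised deep hole $g$ of $V_\Lambda$ projecting to $\nu$ with $\Phi(g)=A_2^3$.
   Context: $\Lambda$ is the Leech lattice, $\mathrm O(\Lambda)\cong\mathrm{Co}_0$, $V_\Lambda$ its lattice VOA (strongly rational, i.e.\ rational, $C_2$-cofinite, self-contragredient, CFT-type; holomorphic; central charge 24). $\pi_\nu=\frac1{|\nu|}\sum_i\nu^i$ is the projection onto the $\nu$-fixed subspace of $\Lambda\otimes\mathbb R$. Cycle shape $\prod t^{b_t}$ of $\nu$: characteristic polynomial $\prod(x^t-1)^{b_t}$; vacuum anomaly $\rho_\nu=\frac1{24}\sum b_t(t-1/t)$. Automorphisms of $V_\Lambda$ are $\phi_\eta(\nu)\sigma_h$ ($\phi_\eta(\nu)$ a lift of $\nu$, $\sigma_h=e^{2\pi ih_0}$), projecting to $\nu$. For $g$ of order $n$, $V_\Lambda(g^i)$ is the unique irreducible $g^i$-twisted module; type $0$ means its conformal weight is in $\frac1n\mathbb Z$; positivity: irreducible $V_\Lambda^g$-modules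 other than $V_\Lambda^g$ have positive conformal weight; $V_\Lambda^{\mathrm{orb}(g)}=\bigoplus_{i\in\mathbb Z_n}W^{(i,0)}$ is the cyclic orbifold construction ($W^{(i,0)}$ the $g$-invariants of $V_\Lambda(g^i)$). With $c_n(d)$ given by $\sum_{d\mid n}c_n(d)\gcd(t,d)=n/t$ for all $t\mid n$, $g$ (order $n>1$, type 0, positivity) is a generalised deep hole if $\dim (V_\Lambda^{\mathrm{orb}(g)})_1=24+\sum_{d\mid n}c_n(d)\dim(V_\Lambda^{g^d})_1$ and $\operatorname{rk}(V_\Lambda^{\mathrm{orb}(g)})_1=\operatorname{rk}(V_\Lambda^g)_1$. $\Phi(g)$ is the Dynkin diagram (Cartan matrix $2\langle\alpha_i,\alpha_j\rangle/\langle\alpha_i,\alpha_i\rangle$) of the set of weights of the Cartan subalgebra $(V_\Lambda^g)_1\cong\pi_\nu(\Lambda\otimes\mathbb C)$ of $(V_\Lambda^{\mathrm{orb}(g)})_1$ acting on $V_\Lambda(g)_1$. *)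

(* Defs.v *)
From HB Require Import structures.
From mathcomp Require Import all_boot all_order all_algebra.
Set Implicit Arguments. Unset Strict Implicit. Unset Printing Implicit Defensive.
Import Order.TTheory GRing.Theory Num.Theory.
Local Open Scope ring_scope.

(* Lattices of rank 24 are given in coordinates: a lattice point is a row
   vector in 'rV[rat]_24 with integer coordinates w.r.t. a fixed Z-basis,
   and the bilinear form is  <x,y> = x G y^T  for the Gram matrix G. *)

Definition intvec (n : nat) (v : 'rV[rat]_n) : Prop :=
  forall i, v 0 i \is a Num.int.

Definition intmx (m n : nat) (A : 'M[rat]_(m, n)) : Prop :=
  forall i j, A i j \is a Num.int.

Definition form (n : nat) (G : 'M[rat]_n) (x y : 'rV[rat]_n) : rat :=
  (x *m G *m y^T) 0 0.

(* G is a Gram matrix of the Leech lattice: an even unimodular positive-definite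
   lattice of rank 24 without roots (vectors of norm 2).  By Conway's theorem
   this characterises the Leech lattice up to isometry. *)
Definition is_Leech_gram (G : 'M[rat]_24) : Prop :=
  intmx G /\ G^T = G /\ (forall i, (G i i / 2%:R) \is a Num.int) /\
  \det G = 1 /\
  (forall x : 'rV[rat]_24, x != 0 -> 0 < form G x x) /\
  (forall x : 'rV[rat]_24, intvec x -> form G x x != 2%:R).

(* N (acting on row vectors x |-> x *m N) is an element of O(Lambda):
   it preserves the lattice and the form. *)
Definition in_O_lattice (G N : 'M[rat]_24) : Prop :=
  intmx N /\ N *m G *m N^T = G.

Definition is_order (N : 'M[rat]_24) (n : nat) : Prop :=
  (0 < n)%N /\ N ^+ n = 1 /\ (forall m : nat, (0 < m < n)%N -> N ^+ m != 1).

Definition cycle_shape_2_12 (N : 'M[rat]_24) : Prop :=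
  char_poly N = ('X ^+ 2 - 1) ^+ 12.

Definition pi_nu (N : 'M[rat]_24) (n : nat) (x : 'rV[rat]_24) : 'rV[rat]_24 :=
  (n%:R)^-1 *: \sum_(i < n) (x *m N ^+ i).

(* vacuum anomaly of cycle shape 2^12: (1/24) * 12 * (2 - 1/2) = 3/4 *)
Definition rho_2_12 : rat := 3%:R / 4%:R.

Definition in_pi_lattice (N : 'M[rat]_24) (n : nat) (b : 'rV[rat]_24) : Prop :=
  exists x, intvec x /\ b = pi_nu N n x.

Definition in_pi_rational (N : 'M[rat]_24) (n : nat) (h : 'rV[rat]_24) : Prop :=
  exists x, h = pi_nu N n x.

Definition vertex (G N : 'M[rat]_24) (n : nat) (rho : rat) (h b : 'rV[rat]_24) : Prop :=
  in_pi_lattice N n b /\ form G (b - h) (b - h) / 2%:R = 1 - rho.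

Definition hdist (G : 'M[rat]_24) (a b : 'rV[rat]_24) : rat :=
  form G (a - b) (a - b) / 2%:R.

(* The diagram contains A_2^3: there are six vertices b_(k,0), b_(k,1) (k<3)
   such that the induced subdiagram on them is A_2 + A_2 + A_2: the two
   vertices of each component are joined by a single edge (distance 3(1-rho))
   and vertices in different components are not joined (distance 2(1-rho)). *)
Definition contains_A2_cubed (G N : 'M[rat]_24) (n : nat) (rho : rat)
    (h : 'rV[rat]_24) : Prop :=
  exists b : 'I_3 -> 'I_2 -> 'rV[rat]_24,
    (forall k l, vertex G N n rho h (b k l)) /\
    (forall k, hdist G (b k 0) (b k 1) = 3%:R * (1 - rho)) /\
    (forall k k' l l', k != k' -> hdist G (b k l) (b k' l') = 2%:R * (1 - rho)).

(* Main.v *)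
Require Import Defs.
From mathcomp Require Import all_boot all_order all_algebra zify ring lra.
Import GRing.Theory Num.Theory.
Import Defs.
Local Open Scope ring_scope.

Lemma unip (m : nat) (P : 'M[rat]_m.+1) (n k : nat) :
  (0 < n)%N -> P ^+ n = 1 -> (P - 1) ^+ k.+1 = 0 -> P = 1.
Proof.
case: n => [//|n] n0 Pn Mk.
set M := P - 1.
have E : \sum_(i < n.+2) M ^+ i *+ 'C(n.+1, i) = 1.
  by rewrite -exprD1n /M subrK.
have step : forall j, M ^+ j.+2 = 0 -> M ^+ j.+1 = 0.
  move=> j Hj.
  have : M ^+ j * (\sum_(i < n.+2) M ^+ i *+ 'C(n.+1, i)) = M ^+ j by rewrite E mulr1.
  rewrite mulr_sumr big_ord_recl /= big_ord_recl /=.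
  rewrite big1; last first.
    move=> i _; rewrite mulrnAr -exprD.
    have -> : (j + bump 0 (bump 0 i) = j.+2 + i)%N by rewrite /bump /=; lia.
    by rewrite exprD Hj mul0r mul0rn.
  rewrite /bump /= expr0 bin1 mulr1n mulr1 expr1 addr0 mulrnAr -exprSr.
  rewrite -[X in _ = X]addr0 => /addrI H.
  apply/matrixP => a b; have := congr1 (fun A : 'M[rat]_m.+1 => A a b) H.
  rewrite mulmxnE !mxE => /eqP; rewrite mulrn_eq0 /= => /eqP.
  by [].
have : forall e, M ^+ e.+1 = 0 -> M ^+ 1 = 0.
  elim=> [//|e IH] He; exact: IH (step _ He).
move=> /(_ k Mk); rewrite expr1 => /eqP; rewrite subr_eq0 => /eqP.
by [].
Qed.
Lemma intmx_mul m n p (A : 'M[rat]_(m, n)) (B : 'M[rat]_(n, p)) :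
  intmx A -> intmx B -> intmx (A *m B).
Proof.
move=> hA hB i j; rewrite mxE; apply: rpred_sum => k _; exact: rpredM.
Qed.

Lemma intmx_add m n (A B : 'M[rat]_(m, n)) : intmx A -> intmx B -> intmx (A + B).
Proof. by move=> hA hB i j; rewrite mxE; apply: rpredD. Qed.

Lemma intmx_tr m n (A : 'M[rat]_(m, n)) : intmx A -> intmx A^T.
Proof. by move=> hA i j; rewrite mxE. Qed.

Lemma intvec_mx n (v : 'rV[rat]_n) : intvec v -> intmx v.
Proof. by move=> h i j; rewrite (ord1 i). Qed.

Lemma intvecB n (x y : 'rV[rat]_n) : intvec x -> intvec y -> intvec (x - y).
Proof. by move=> hx hy i; rewrite !mxE; apply: rpredB. Qed.

Lemma pi_nuB N n (x y : 'rV[rat]_24) : pi_nu N n x - pi_nu N n y = pi_nu N n (x - y).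
Proof.
rewrite /pi_nu -scalerBr; congr (_ *: _); rewrite -sumrB.
by apply: eq_bigr => i _; rewrite mulmxBl.
Qed.

Lemma formZ n (G : 'M[rat]_n) a b x y : form G (a *: x) (b *: y) = a * b * form G x y.
Proof.
by rewrite /form linearZ /= -scalemxAl -scalemxAl -scalemxAr !mxE mulrA.
Qed.

Lemma formC n (G : 'M[rat]_n) x y : G^T = G -> form G x y = form G y x.
Proof.
move=> GT; rewrite /form.
have -> : (x *m G *m y^T) 0 0 = ((x *m G *m y^T)^T) 0 0 by rewrite [RHS]mxE.
by rewrite !trmx_mul trmxK GT mulmxA.
Qed.

Lemma formBB n (G : 'M[rat]_n) x y :
  form G (x - y) (x - y) = form G x x - form G x y - form G y x + form G y y.
Proof.
rewrite /form (linearB trmx) /= !mulmxBl !mulmxBr !mxE; ring.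
Qed.

Lemma pi2 N (x : 'rV[rat]_24) : pi_nu N 2 x = 2^-1 *: (x + x *m N).
Proof. by rewrite /pi_nu big_ord_recr big_ord_recr big_ord0 /= add0r expr0 mulmx1 expr1. Qed.

Lemma pi1 N (x : 'rV[rat]_24) : pi_nu N 1 x = x.
Proof. by rewrite /pi_nu big_ord_recr big_ord0 /= add0r expr0 mulmx1 invr1 scale1r. Qed.

Lemma key2 G N (u w : 'rV[rat]_24) : N *m G *m N^T = G -> N *m N = 1%:M ->
  intmx G -> intmx N -> intvec u -> intvec w ->
  (2 * form G (pi_nu N 2 u) (pi_nu N 2 w)) \is a Num.int.
Proof.
move=> hO hN iG iN iu iw.
have GNT : G *m N^T = N *m G.
  by rewrite -[in LHS](mul1mx G) -hN -!mulmxA [N *m (G *m _)]mulmxA hO.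
set X := (u + u *m N) *m G *m w^T.
have e : (u + u *m N) *m G *m (w + w *m N)^T = X + X.
  rewrite (linearD trmx) /= trmx_mul mulmxDr /X; congr (_ + _).
  rewrite mulmxA -(mulmxA _ G) GNT mulmxA mulmxDl -!mulmxA hN mulmx1 addrC.
  by rewrite !mulmxA.
rewrite !pi2 formZ /form e mxE.
have -> : 2 * (2^-1 * 2^-1 * (X 0 0 + X 0 0)) = X 0 0 :> rat.
  by field.
suff : intmx X by move=> /(_ 0 0).
apply: intmx_mul; last by apply: intmx_tr; apply: intvec_mx.
apply: intmx_mul => //; apply: intmx_add; first exact: intvec_mx.
by apply: intmx_mul => //; exact: intvec_mx.
Qed.

Lemma key1 G N (u w : 'rV[rat]_24) :
  intmx G -> intvec u -> intvec w ->
  (2 * form G (pi_nu N 1 u) (pi_nu N 1 w)) \is a Num.int.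
Proof.
move=> iG iu iw; rewrite !pi1; apply: rpredM; first by [].
apply: intmx_mul; last by apply: intmx_tr; apply: intvec_mx.
by apply: intmx_mul => //; exact: intvec_mx.
Qed.

Theorem mainTheorem13 (G N : 'M[rat]_24) (n : nat) :
  is_Leech_gram G ->
  in_O_lattice G N ->
  is_order N n ->
  cycle_shape_2_12 N ->
  ~ exists h : 'rV[rat]_24,
      in_pi_rational N n h /\ contains_A2_cubed G N n rho_2_12 h.
Proof.
move=> [iG [GT _]] [iN hO] [n0 [Nn Nmin]] cyc [h [_ [b [hv [h2 h3]]]]].
have CH : (N ^+ 2 - 1) ^+ 12 = 0 :> 'M[rat]_24.
  have := Cayley_Hamilton N; rewrite cyc.
  rewrite rmorphXn rmorphB rmorph1 rmorphXn.
  by rewrite [X in X ^+ 2](horner_mx_X N).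
have N2 : N ^+ 2 = 1.
  apply: (@unip 23 _ n 11) => //.
  by rewrite -exprM mulnC exprM Nn expr1n.
have n12 : n = 1%N \/ n = 2%N.
  case: (ltngtP n 2) => [lt|gt|->]; [left; lia| |by right].
  by have := Nmin 2%N; rewrite gt N2 eqxx => /(_ isT).
have hN : N *m N = 1%:M by move: N2; rewrite expr2.
have key : forall u w : 'rV[rat]_24, intvec u -> intvec w ->
    (2 * form G (pi_nu N n u) (pi_nu N n w)) \is a Num.int.
  move=> u w iu iw; case: n12 => ->; [exact: key1|exact: key2].
have [xp [ip ep]] := (hv 0 0).1.
have [xq [iq eq]] := (hv 1 0).1.
have [xr [ir er]] := (hv 1 1).1.
have d1 := h3 0 1 0 0 isT.
have d2 := h3 0 1 0 1 isT.
have d3 := h2 1.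
move: d1 d2 d3; rewrite /hdist ep eq er.
have -> : pi_nu N n xq - pi_nu N n xr =
   (pi_nu N n xp - pi_nu N n xr) - (pi_nu N n xp - pi_nu N n xq).
  by rewrite opprB [RHS]addrC [RHS]addrA subrK.
set A := pi_nu N n xp - pi_nu N n xq.
set C := pi_nu N n xp - pi_nu N n xr.
rewrite (@formBB _ G C A) (@formC _ G A C GT) /A /C !pi_nuB.
have := key _ _ (intvecB _ _ _ ip ir) (intvecB _ _ _ ip iq).
set a := form G (pi_nu N n (xp - xr)) (pi_nu N n (xp - xq)).
set c1 := form G (pi_nu N n (xp - xq)) _.
set c2 := form G (pi_nu N n (xp - xr)) _.
move=> /intrP [m hm] E1 E2 E3.
have : (m * 2)%:~R = (1 : rat).
  rewrite intrM -hm /rho_2_12 in E1 E2 E3 *.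
  lra.
rewrite -[X in _ = X]/((1%:Z)%:~R) => /intr_inj; lia.
Qed.
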